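(* For any constants $\beta_1, \beta_2 \in [0,1)$ with $\beta_1 < \sqrt{\beta_2}$, there exists a one-dimensional stochastic convex optimization problem — a compact convex set $\mathcal{F} \subset \mathbb{R}$ and a distribution over convex (linear) functions $f$ on $\mathcal{F}$ with bounded gradients, with expected objective $F(x) = \mathbb{E}[f(x)]$ having minimizer $x^*$ over $\mathcal{F}$ — such that, for every initial step size $\alpha > 0$, \textsc{Adam} run with parameters $\alpha, \beta_1, \beta_2$ on i.i.d. samples $f_1, f_2, \dots$ from this distribution does not converge to the optimal solution $x^*$.
   Context: \textsc{Adam} (without debiasing) on a closed convex set $\mathcal{F} \subset \mathbb{R}^d$ with loss functions $f_1, f_2, \dots$, initial point $x_1 \in \mathcal{F}$, initial step size $\alpha > 0$ and constants $\beta_1, \beta_2 \in [0,1)$ is defined as follows. Set $m_0 = v_0 = 0 \in \mathbb{R}^d$. For $t = 1, 2, \dots$: $g_t = \nabla f_t(x_t)$; $m_t = \beta_1 m_{t-1} + (1-\beta_1) g_t$; $v_t = \beta_2 v_{t-1} + (1-\beta_2) g_t^2$ (square taken coordinatewise); $V_t = \mathrm{diag}(v_t)$; $\alpha_t = \alpha/\sqrt{t}$; $\hat{x}_{t+1} = x_t - \alpha_t V_t^{-1/2} m_t$; $x_{t+1} = \Pi_{\mathcal{F}, \sqrt{V_t}}(\hat{x}_{t+1})$, where for a positive definite matrix $M$, $\Pi_{\mathcal{F}, M}(y) = \arg\min_{x \in \mathcal{F}} \|M^{1/2}(x-y)\|$. *)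

(* Defs.v *)
From Stdlib Require Import Reals List.
Import ListNotations.
Open Scope R_scope.

(* Euclidean projection onto the interval [a,b] (a <= b).  In dimension one
   the weighted projection Pi_{F, sqrt V_t} with V_t > 0 a positive scalar
   coincides with this Euclidean projection. *)
Definition clamp (a b y : R) : R := Rmax a (Rmin b y).

(* Adam state after step t: (x_{t+1}, m_t, v_t). The initial state is
   (x_1, m_0, v_0) = (x_1, 0, 0). *)
Definition adam_state : Type := (R * R * R)%type.
Definition st_x (s : adam_state) : R := fst (fst s).
Definition st_m (s : adam_state) : R := snd (fst s).
Definition st_v (s : adam_state) : R := snd s.

(* One Adam step (without debiasing) in dimension 1 on the feasible set
   [a,b]: at time t = k+1, given state (x_t, m_{t-1}, v_{t-1}) and the
   gradient g_t = f_t'(x_t), produce (x_{t+1}, m_t, v_t). *)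
Definition adam_step (alpha beta1 beta2 a b : R) (k : nat)
    (s : adam_state) (g : R) : adam_state :=
  let m := beta1 * st_m s + (1 - beta1) * g in
  let v := beta2 * st_v s + (1 - beta2) * g ^ 2 in
  let alpha_t := alpha / sqrt (INR (S k)) in
  let xhat := st_x s - alpha_t * m / sqrt v in
  (clamp a b xhat, m, v).

(* A finitely supported distribution over linear loss functions
   f(x) = g * x on R, given as a list of (probability, gradient) atoms. *)
Definition distribution : Type := list (R * R).

Definition is_distribution (D : distribution) : Prop :=
  Forall (fun pg => 0 <= fst pg) D /\ fold_right (fun pg acc => fst pg + acc) 0 D = 1.

Definition objective (D : distribution) (x : R) : R :=
  fold_right (fun pg acc => fst pg * (snd pg * x) + acc) 0 D.

(* Expectation of phi(state) after n further Adam steps, starting from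
   state s at time k, where each step uses a fresh independent sample
   from D (i.i.d. sampling). *)
Fixpoint adam_expect (alpha beta1 beta2 a b : R) (D : distribution)
    (n k : nat) (s : adam_state) (phi : adam_state -> R) : R :=
  match n with
  | O => phi s
  | S n' =>
      fold_right
        (fun pg acc =>
           fst pg * adam_expect alpha beta1 beta2 a b D n' (S k)
                      (adam_step alpha beta1 beta2 a b k s (snd pg)) phi
           + acc) 0 D
  end.

(* E[ phi(x_{n+1}) ] for Adam started at x_1. *)
Definition adam_iter_expect (alpha beta1 beta2 a b x1 : R) (D : distribution)
    (n : nat) (phi : R -> R) : R :=
  adam_expect alpha beta1 beta2 a b D n 0 (x1, 0, 0) (fun s => phi (st_x s)).

(* Main.v *)
Require Import Defs.
From Stdlib Require Import Reals List Lra Lia.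
Import ListNotations.
Open Scope R_scope.

Definition wsum (D : distribution) (F : R -> R) : R :=
  fold_right (fun pg acc => fst pg * F (snd pg) + acc) 0 D.

Lemma E_S al b1 b2 a b D n k s phi :
  adam_expect al b1 b2 a b D (S n) k s phi =
  wsum D (fun g => adam_expect al b1 b2 a b D n (S k) (adam_step al b1 b2 a b k s g) phi).
Proof. reflexivity. Qed.

Lemma wsum_plus D F G : wsum D (fun g => F g + G g) = wsum D F + wsum D G.
Proof. induction D as [|[p g] D IH]; simpl; [lra|]. rewrite IH. ring. Qed.

Lemma wsum_scale D c F : wsum D (fun g => c * F g) = c * wsum D F.
Proof. induction D as [|[p g] D IH]; simpl; [lra|]. rewrite IH. ring. Qed.

Lemma wsum_const D c : wsum D (fun _ => c) = c * fold_right (fun pg acc => fst pg + acc) 0 D.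
Proof. induction D as [|[p g] D IH]; simpl; [lra|]. rewrite IH. ring. Qed.

Lemma wsum_mono D F G : Forall (fun pg => 0 <= fst pg) D ->
  (forall pg, In pg D -> F (snd pg) <= G (snd pg)) -> wsum D F <= wsum D G.
Proof.
  induction D as [|[p g] D IH]; simpl; intros Hn Hle; [lra|].
  inversion Hn; subst. simpl in *.
  assert (Hq1 := Hle (p,g) (or_introl eq_refl)). simpl in Hq1.
  assert (Hq2 : wsum D F <= wsum D G) by (apply IH; auto).
  apply Rplus_le_compat; auto. apply Rmult_le_compat_l; auto.
Qed.

Lemma wsum_ext D F G : (forall pg, In pg D -> F (snd pg) = G (snd pg)) -> wsum D F = wsum D G.
Proof.
  induction D as [|[p g] D IH]; simpl; intros Hle; [lra|].
  rewrite (Hle (p,g) (or_introl eq_refl) : F g = G g). rewrite IH; auto.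
Qed.

Lemma E_plus al b1 b2 a b D n : forall k s f h,
  adam_expect al b1 b2 a b D n k s (fun st => f st + h st) =
  adam_expect al b1 b2 a b D n k s f + adam_expect al b1 b2 a b D n k s h.
Proof.
  induction n; intros; [reflexivity|]. rewrite !E_S.
  rewrite <- wsum_plus. apply wsum_ext. intros. apply IHn.
Qed.

Lemma E_scale al b1 b2 a b D n : forall k s c f,
  adam_expect al b1 b2 a b D n k s (fun st => c * f st) =
  c * adam_expect al b1 b2 a b D n k s f.
Proof.
  induction n; intros; [reflexivity|]. rewrite !E_S.
  rewrite <- wsum_scale. apply wsum_ext. intros. apply IHn.
Qed.

Lemma E_const al b1 b2 a b D n : is_distribution D -> forall k s c,
  adam_expect al b1 b2 a b D n k s (fun _ => c) = c.
Proof.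
  intros [_ H1]. induction n; intros; [reflexivity|]. rewrite !E_S.
  transitivity (wsum D (fun _ => c)).
  - apply wsum_ext. intros. apply IHn.
  - rewrite wsum_const, H1. ring.
Qed.

Lemma E_tower al b1 b2 a b D n : forall k s phi,
  adam_expect al b1 b2 a b D (S n) k s phi =
  adam_expect al b1 b2 a b D n k s
    (fun st => adam_expect al b1 b2 a b D 1 (k + n) st phi).
Proof.
  induction n; intros.
  - simpl. rewrite Nat.add_0_r. reflexivity.
  - rewrite E_S. rewrite (E_S _ _ _ _ _ _ n). apply wsum_ext. intros.
    rewrite IHn. replace (S k + n)%nat with (k + S n)%nat by lia. reflexivity.
Qed.

Lemma E_mono al b1 b2 a b D (P : adam_state -> Prop) :
  Forall (fun pg => 0 <= fst pg) D ->
  (forall k st pg, In pg D -> P st -> P (adam_step al b1 b2 a b k st (snd pg))) ->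
  forall n k s f h, P s -> (forall st, P st -> f st <= h st) ->
  adam_expect al b1 b2 a b D n k s f <= adam_expect al b1 b2 a b D n k s h.
Proof.
  intros Hn HP n. induction n; intros k s f h Ps Hfh; simpl; [auto|].
  apply (wsum_mono D (fun g => adam_expect al b1 b2 a b D n (S k) (adam_step al b1 b2 a b k s g) f)
     (fun g => adam_expect al b1 b2 a b D n (S k) (adam_step al b1 b2 a b k s g) h)); auto.
Qed.

Lemma ln_le_sub1 x : 0 < x -> ln x <= x - 1.
Proof. intros. pose proof (exp_ineq1_le (ln x)). rewrite exp_ln in H0; lra. Qed.

Lemma ln_diff_ge a b : 0 < a -> 0 < b -> (a - b) / a <= ln a - ln b.
Proof.
  intros. pose proof (ln_le_sub1 (b / a)) as H1.
  assert (0 < b / a) by (apply Rdiv_lt_0_compat; auto).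
  specialize (H1 H2). unfold Rdiv in H1. rewrite ln_mult, ln_Rinv in H1; auto; [|apply Rinv_0_lt_compat; auto].
  replace ((a - b) / a) with (1 - b * / a) by (field; lra). lra.
Qed.

Lemma ln_le' a b : 0 < a -> a <= b -> ln a <= ln b.
Proof. intros. destruct (Req_dec a b). subst; lra. left; apply ln_increasing; lra. Qed.

Lemma ln_ge0 a : 1 <= a -> 0 <= ln a.
Proof. intros. rewrite <- ln_1. apply ln_le'; lra. Qed.

(* g = -1, v >= 1 *)
Lemma coreM_big (cc RR b m v w w' : R) :
  0 < b < 1 -> 0 <= cc -> 0 <= RR -> 1 <= v -> 0 < w -> 0 < w' -> w * w = v ->
  w' * w' = b * v + (1 - b) -> Rabs m <= RR * w ->
  1 / w' + cc * m * (1 / w - 1 / w')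
  + (cc * RR / b + 1) / 2 * (ln v - ln (b * v + (1 - b)))
  >= Rmin (1/2) (ln (4 / (1 + 3 * b)) / 2).
Proof.
  intros Hb Hc HR Hv Hw Hw' Ew Ew' Hm.
  set (v' := b * v + (1 - b)) in *.
  assert (Hv'1 : 1 <= v') by (unfold v'; nra).
  assert (Hv'v : v' <= v) by (unfold v'; nra).
  assert (Hww : w' <= w) by nra.
  assert (Hd : 0 <= 1 / w' - 1 / w).
  { assert (/ w <= / w') by (apply Rinv_le_contravar; lra). unfold Rdiv; lra. }
  assert (HT2 : cc * m * (1 / w - 1 / w') >= - (cc * RR) * (w / w' - 1)).
  { assert (m * (1 / w - 1 / w') >= - (RR * w) * (1/w' - 1/w)).
    { 
      assert (m <= RR*w) by (pose proof (Rle_abs m); lra). set (d := 1/w' - 1/w) in *. replace (1/w - 1/w') with (-d) by (unfold d; ring).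
      nra. }
    replace (- (RR * w) * (1 / w' - 1 / w)) with (- RR * (w / w' - 1)) in H by (field; lra).
    nra. }
  assert (Hq : w / w' - 1 <= (v / v' - 1) / 2).
  { replace (v / v') with ((w/w') * (w/w')) by (rewrite <- Ew, <- Ew'; field; lra). set (t := w/w'). pose proof (pow2_ge_0 (t-1)). nra. }
  assert (Hl : (v - v') / v <= ln v - ln v') by (apply ln_diff_ge; lra).
  assert (Hq2 : v / v' - 1 <= (v - v') / (b * v)).
  { replace (v / v' - 1) with ((v - v') / v') by (field; lra).
    unfold Rdiv. apply Rmult_le_compat_l; [lra|]. apply Rinv_le_contravar; [apply Rmult_lt_0_compat; lra| unfold v'; lra]. }
  assert (Hq3 : (v - v') / (b * v) = ((v - v') / v) / b) by (field; lra).
  assert (Hkey : w / w' - 1 <= (ln v - ln v') / (2 * b)).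
  { assert ((v - v') / v / b <= (ln v - ln v') / b).
    { unfold Rdiv at 2 3. apply Rmult_le_compat_r; [left; apply Rinv_0_lt_compat; lra|]. lra. }
    replace ((ln v - ln v') / (2 * b)) with (((ln v - ln v') / b) / 2) by (field; lra). lra. }
  assert (Hsum : 1 / w' + cc * m * (1 / w - 1 / w') + (cc * RR / b + 1) / 2 * (ln v - ln v')
                  >= 1 / w' + (ln v - ln v') / 2).
  { assert (cc * RR * (w / w' - 1) <= cc * RR * ((ln v - ln v') / (2 * b))) by
      (apply Rmult_le_compat_l; nra).
    replace ((cc * RR / b + 1) / 2 * (ln v - ln v')) with
      (cc * RR * ((ln v - ln v') / (2 * b)) + (ln v - ln v') / 2) by (field; lra).
    lra. }
  assert (Hln0 : 0 <= ln v - ln v') by (pose proof (ln_le' v' v); lra).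
  destruct (Rle_lt_dec v 4) as [H4|H4].
  - assert (w' <= 2) by nra.
    assert (1/2 <= 1 / w') by (unfold Rdiv; rewrite !Rmult_1_l; apply Rinv_le_contravar; lra).
    pose proof (Rmin_l (1/2) (ln (4 / (1 + 3 * b)) / 2)). lra.
  - assert (ln (4 / (1 + 3 * b)) <= ln v - ln v').
    { replace (ln v - ln v') with (ln (v / v')).
      2:{ unfold Rdiv. rewrite ln_mult, ln_Rinv; try lra. apply Rinv_0_lt_compat; lra. }
      apply ln_le'. apply Rdiv_lt_0_compat; lra.
      apply Rmult_le_reg_r with (v' * (1 + 3*b)). nra.
      replace (4 / (1 + 3 * b) * (v' * (1 + 3 * b))) with (4 * v') by (field; lra).
      replace (v / v' * (v' * (1 + 3 * b))) with (v * (1 + 3*b)) by (field; lra).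
      unfold v'. nra. }
    assert (0 < 1 / w') by (unfold Rdiv; rewrite Rmult_1_l; apply Rinv_0_lt_compat; lra).
    pose proof (Rmin_r (1/2) (ln (4 / (1 + 3 * b)) / 2)). lra.
Qed.

Lemma m_bounds m RR w : Rabs m <= RR * w -> -(RR*w) <= m <= RR * w.
Proof. intros. pose proof (Rle_abs m). pose proof (Rle_abs (-m)). rewrite Rabs_Ropp in *. lra. Qed.

Lemma coreM_small (cc RR b m v w w' : R) :
  0 < b < 1 -> 0 <= cc -> 0 <= RR -> 1 - b <= v < 1 -> 0 < w -> 0 < w' -> w * w = v ->
  w' * w' = b * v + (1 - b) -> Rabs m <= RR * w ->
  1 / w' + cc * m * (1 / w - 1 / w') + cc * RR / (1 - b) * (b * v + (1 - b) - v) >= 1.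
Proof.
  intros Hb Hc HR Hv Hw Hw' Ew Ew' Hm. apply m_bounds in Hm.
  set (v' := b * v + (1 - b)) in *.
  assert (v <= v' < 1) by (unfold v'; nra).
  assert (w <= w') by nra.
  assert (w' < 1) by nra.
  assert (1 <= 1 / w').
  { unfold Rdiv. rewrite Rmult_1_l. rewrite <- Rinv_1. apply Rinv_le_contravar; lra. }
  assert (Hd : 0 <= 1 / w - 1 / w').
  { assert (/ w' <= / w) by (apply Rinv_le_contravar; lra). unfold Rdiv; lra. }
  assert (m * (1 / w - 1 / w') >= - (RR * w) * (1/w - 1/w')) by nra.
  replace (- (RR * w) * (1 / w - 1 / w')) with (- RR * (1 - w / w')) in H3 by (field; lra).
  assert (Ht : 1 - w / w' <= 1 - v / v').
  { replace (v / v') with ((w/w') * (w/w')) by (rewrite <- Ew, <- Ew'; field; lra).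
    assert (0 <= w / w' <= 1).
    { split. unfold Rdiv; apply Rmult_le_pos; [lra|left; apply Rinv_0_lt_compat; lra]. apply Rmult_le_reg_r with w'; auto.
      replace (w / w' * w') with w by (field; lra). lra. }
    nra. }
  assert (Ht2 : 1 - v / v' <= (v' - v) / (1 - b)).
  { replace (1 - v / v') with ((v' - v) / v') by (field; lra).
    unfold Rdiv. apply Rmult_le_compat_l; [lra|]. apply Rinv_le_contravar; [lra|]. unfold v'; nra. }
  assert (cc * (RR * (1 - w / w')) <= cc * RR * ((v' - v) / (1 - b))).
  { rewrite <- Rmult_assoc. apply Rmult_le_compat_l; nra. }
  replace (cc * RR / (1 - b) * (v' - v)) with (cc * RR * ((v' - v) / (1 - b))) by (field; lra).
  nra.
Qed.

Lemma coreC (cc RR lam mu b m v w w' C : R) :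
  0 < b < 1 -> 0 <= cc -> 0 <= RR -> 0 <= lam -> 0 <= mu -> 1 <= C ->
  1 - b <= v <= C * C -> 0 < w -> 0 < w' -> w * w = v ->
  w' * w' = b * v + (1 - b) * C ^ 2 -> Rabs m <= RR * w ->
  - C / w' + cc * m * (1 / w - 1 / w')
  - lam / 2 * (ln (Rmax (b * v + (1 - b) * C ^ 2) 1) - ln (Rmax v 1))
  + mu * (Rmin (b * v + (1 - b) * C ^ 2) 1 - Rmin v 1)
  >= - (1 / sqrt (1 - b) + cc * RR + lam * ln C).
Proof.
  intros Hb Hc HR Hl Hmu HC Hv Hw Hw' Ew Ew' Hm. apply m_bounds in Hm.
  set (v' := b * v + (1 - b) * C ^ 2) in *.
  assert (v <= v' <= C * C) by (unfold v'; nra).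
  assert (w <= w') by nra.
  assert (HT1 : C / w' <= 1 / sqrt (1 - b)).
  { assert (Hs : sqrt (1 - b) * C <= w').
    { assert (0 < sqrt (1 - b)) by (apply sqrt_lt_R0; lra).
      pose proof (sqrt_sqrt (1 - b)).
      assert ((sqrt (1 - b) * C) * (sqrt (1 - b) * C) <= w' * w') by (rewrite Ew'; unfold v'; nra).
      nra. }
    assert (0 < sqrt (1 - b)) by (apply sqrt_lt_R0; lra).
    apply Rmult_le_reg_r with (w' * sqrt (1 - b)). nra.
    replace (C / w' * (w' * sqrt (1 - b))) with (C * sqrt (1 - b)) by (field; lra).
    replace (1 / sqrt (1 - b) * (w' * sqrt (1 - b))) with w' by (field; lra). nra. }
  assert (HT2 : cc * m * (1 / w - 1 / w') >= - (cc * RR)).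
  { assert (Hd : 0 <= 1 / w - 1 / w').
    { assert (/ w' <= / w) by (apply Rinv_le_contravar; lra). unfold Rdiv; lra. }
    assert (Hd2 : 1 / w - 1 / w' <= 1 / w).
    { assert (0 < / w') by (apply Rinv_0_lt_compat; lra). unfold Rdiv; lra. }
    assert (m * (1 / w - 1 / w') >= - (RR * w) * (1/w - 1/w')) by nra.
    assert ((RR * w) * (1/w - 1/w') <= (RR * w) * (1 / w)) by (apply Rmult_le_compat_l; nra).
    replace (RR * w * (1 / w)) with RR in H2 by (field; lra). nra. }
  assert (HT3 : ln (Rmax v' 1) - ln (Rmax v 1) <= 2 * ln C).
  { assert (ln (Rmax v' 1) <= ln (C * C)).
    { apply ln_le'. pose proof (Rmax_r v' 1); lra. apply Rmax_lub; nra. }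
    rewrite ln_mult in H1 by lra.
    assert (0 <= ln (Rmax v 1)) by (apply ln_ge0, Rmax_r). lra. }
  assert (HT4 : 0 <= Rmin v' 1 - Rmin v 1).
  { assert (Rmin v 1 <= Rmin v' 1).
    { apply Rmin_glb. pose proof (Rmin_l v 1); lra. apply Rmin_r. }
    lra. }
  assert (lam / 2 * (ln (Rmax v' 1) - ln (Rmax v 1)) <= lam * ln C).
  { replace (lam * ln C) with (lam / 2 * (2 * ln C)) by field. apply Rmult_le_compat_l; lra. }
  assert (0 <= mu * (Rmin v' 1 - Rmin v 1)) by nra.
  unfold Rdiv in *. rewrite <- Ropp_mult_distr_l. lra.
Qed.

Definition hyps g1 b2 := 0 <= g1 < 1 /\ 0 <= b2 < 1 /\ g1 < sqrt b2.
Definition cc g1 := g1 / (1 - g1).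
Definition rho g1 b2 := g1 / sqrt b2.
Definition RR g1 b2 := (1 - g1) / (sqrt (1 - b2) * (1 - rho g1 b2)).
Definition lam g1 b2 := cc g1 * RR g1 b2 / b2 + 1.
Definition mu g1 b2 := cc g1 * RR g1 b2 / (1 - b2).
Definition A0 b2 := Rmin (1/2) (ln (4 / (1 + 3 * b2)) / 2).
Definition K1 g1 b2 := 1 / sqrt (1 - b2) + cc g1 * RR g1 b2.
Definition NN g1 b2 := (2 * K1 g1 b2 + 4 * lam g1 b2) / A0 b2 + 1.
Definition CC g1 b2 := NN g1 b2 * NN g1 b2.
Definition pp g1 b2 := 2 / (CC g1 b2 + 2).
Definition qq g1 b2 := CC g1 b2 / (CC g1 b2 + 2).
Definition eps g1 b2 := qq g1 b2 * A0 b2 - pp g1 b2 * (K1 g1 b2 + lam g1 b2 * ln (CC g1 b2)).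
Definition DD g1 b2 : distribution := [(pp g1 b2, CC g1 b2); (qq g1 b2, -1)].
Definition Hf g1 b2 (st : adam_state) :=
  - cc g1 * (st_m st / sqrt (st_v st)) - lam g1 b2 / 2 * ln (Rmax (st_v st) 1)
  + mu g1 b2 * Rmin (st_v st) 1.
Definition BB g1 b2 := cc g1 * RR g1 b2 + lam g1 b2 * ln (CC g1 b2) + mu g1 b2.

Lemma basics g1 b2 : hyps g1 b2 ->
  0 < b2 /\ 0 < sqrt b2 /\ 0 <= rho g1 b2 < 1 /\ 0 <= cc g1 /\ 0 < RR g1 b2 /\
  1 <= lam g1 b2 /\ 0 <= mu g1 b2 /\ 0 < A0 b2 /\ 0 <= K1 g1 b2 /\ 1 <= NN g1 b2 /\
  1 <= CC g1 b2 /\ 0 < eps g1 b2 /\ 0 < pp g1 b2 /\ 0 < qq g1 b2 /\ pp g1 b2 + qq g1 b2 = 1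
  /\ 0 < sqrt (1 - b2).
Proof.
  intros (H1 & H2 & H3).
  assert (Hb : 0 < b2).
  { destruct (Req_dec b2 0); [subst; rewrite sqrt_0 in H3; lra|lra]. }
  assert (Hsb : 0 < sqrt b2) by (apply sqrt_lt_R0; lra).
  assert (Hs1 : 0 < sqrt (1 - b2)) by (apply sqrt_lt_R0; lra).
  assert (Hrho : 0 <= rho g1 b2 < 1).
  { unfold rho. split. apply Rmult_le_pos; [lra|left; apply Rinv_0_lt_compat; lra].
    apply Rmult_lt_reg_r with (sqrt b2); auto. field_simplify; lra. }
  assert (Hcc : 0 <= cc g1) by (unfold cc; apply Rmult_le_pos; [lra|left; apply Rinv_0_lt_compat; lra]).
  assert (HR : 0 < RR g1 b2).
  { unfold RR. apply Rdiv_lt_0_compat; [lra|]. apply Rmult_lt_0_compat; lra. }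
  assert (Hl : 1 <= lam g1 b2).
  { unfold lam. assert (0 <= cc g1 * RR g1 b2 / b2); [|lra].
    apply Rmult_le_pos; [nra|left; apply Rinv_0_lt_compat; lra]. }
  assert (Hmu : 0 <= mu g1 b2).
  { unfold mu. apply Rmult_le_pos; [nra|left; apply Rinv_0_lt_compat; lra]. }
  assert (HA : 0 < A0 b2).
  { unfold A0. apply Rmin_glb_lt; [lra|]. assert (0 < ln (4 / (1 + 3 * b2))); [|lra].
    rewrite <- ln_1. apply ln_increasing; [lra|].
    apply Rmult_lt_reg_r with (1 + 3 * b2); [lra|]. field_simplify; lra. }
  assert (HK : 0 <= K1 g1 b2).
  { unfold K1. assert (0 < 1 / sqrt (1 - b2)) by (apply Rdiv_lt_0_compat; lra). nra. }
  assert (HN : 1 <= NN g1 b2).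
  { unfold NN. assert (0 <= (2 * K1 g1 b2 + 4 * lam g1 b2) / A0 b2); [|lra].
    apply Rmult_le_pos; [lra|left; apply Rinv_0_lt_compat; lra]. }
  assert (HC : 1 <= CC g1 b2) by (unfold CC; nra).
  assert (Hp : 0 < pp g1 b2) by (unfold pp; apply Rdiv_lt_0_compat; lra).
  assert (Hq : 0 < qq g1 b2) by (unfold qq; apply Rdiv_lt_0_compat; lra).
  assert (Hpq : pp g1 b2 + qq g1 b2 = 1) by (unfold pp, qq; field; lra).
  assert (He : 0 < eps g1 b2).
  { unfold eps, pp, qq.
    set (N := NN g1 b2) in *. set (A := A0 b2) in *. set (K := K1 g1 b2) in *. set (L := lam g1 b2) in *.
    assert (HNA : N * A = 2 * K + 4 * L + A).
    { unfold N, NN. fold K. fold L. fold A. field. unfold A; apply Rgt_not_eq; exact HA. }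
    assert (Hln : ln (CC g1 b2) <= 2 * N).
    { unfold CC. fold N. rewrite ln_mult by lra. pose proof (ln_le_sub1 N). lra. }
    assert (Hmain : CC g1 b2 * A - 2 * (K + L * ln (CC g1 b2)) > 0).
    { unfold CC; fold N.
      assert (L * ln (N * N) <= L * (2 * N)).
      { apply Rmult_le_compat_l; [lra|]. unfold CC in Hln; fold N in Hln; lra. }
      assert (N * N * A = N * (2 * K + 4 * L + A)) by (rewrite <- HNA; ring).
      nra. }
    replace (CC g1 b2 / (CC g1 b2 + 2) * A - 2 / (CC g1 b2 + 2) * (K + L * ln (CC g1 b2)))
      with ((CC g1 b2 * A - 2 * (K + L * ln (CC g1 b2))) / (CC g1 b2 + 2)) by (field; lra).
    apply Rdiv_lt_0_compat; lra. }
  repeat split; auto; lra.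
Qed.

Definition Inv g1 b2 (st : adam_state) :=
  0 <= st_x st <= 1 /\ 0 <= st_v st <= CC g1 b2 * CC g1 b2 /\
  Rabs (st_m st) <= RR g1 b2 * sqrt (st_v st).
Definition Good g1 b2 (st : adam_state) :=
  Inv g1 b2 st /\ 1 - b2 <= st_v st.

Lemma sq_le x y : 0 <= x -> 0 <= y -> x * x <= y * y -> x <= y.
Proof. intros. nra. Qed.

Lemma clamp01 y : 0 <= clamp 0 1 y <= 1.
Proof.
  unfold clamp. split. apply Rmax_l. apply Rmax_lub. lra. apply Rmin_l.
Qed.

Lemma step_x al g1 b2 a b k st g : st_x (adam_step al g1 b2 a b k st g) =
  clamp a b (st_x st - al / sqrt (INR (S k)) * (g1 * st_m st + (1 - g1) * g) /
     sqrt (b2 * st_v st + (1 - b2) * g ^ 2)).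
Proof. reflexivity. Qed.
Lemma step_m al g1 b2 a b k st g : st_m (adam_step al g1 b2 a b k st g) = g1 * st_m st + (1 - g1) * g.
Proof. reflexivity. Qed.
Lemma step_v al g1 b2 a b k st g : st_v (adam_step al g1 b2 a b k st g) = b2 * st_v st + (1 - b2) * g ^ 2.
Proof. reflexivity. Qed.

Lemma step_pres g1 b2 al k st g : hyps g1 b2 -> Inv g1 b2 st ->
  (g = CC g1 b2 \/ g = -1) ->
  Good g1 b2 (adam_step al g1 b2 0 1 k st g).
Proof.
  intros Hh (Hx & Hv & Hm) Hg.
  pose proof (basics g1 b2 Hh) as (Hb & Hsb & Hrho & Hcc & HR & _ & _ & _ & _ & _ & HC & _ & _ & _ & _ & Hs1).
  destruct Hh as (H1 & H2 & H3).
  assert (Hg2 : 1 <= g ^ 2 <= CC g1 b2 * CC g1 b2) by (destruct Hg; subst; simpl; nra).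
  assert (Hga : Rabs g <= CC g1 b2) by (destruct Hg; subst; [rewrite Rabs_right|rewrite Rabs_left]; lra).
  unfold Good, Inv. rewrite step_x, step_m, step_v.
  set (v := st_v st) in *. set (m := st_m st) in *.
  set (v' := b2 * v + (1 - b2) * g ^ 2).
  assert (Hv' : 1 - b2 <= v' <= CC g1 b2 * CC g1 b2) by (unfold v'; nra).
  split; [split; [apply clamp01|split]|]; try lra; [].
  pose proof (sqrt_sqrt v' ltac:(lra)) as Ev'. pose proof (sqrt_sqrt v ltac:(lra)) as Ev.
  pose proof (sqrt_positivity v ltac:(lra)) as Hsv.
  assert (Hw' : 0 < sqrt v') by (apply sqrt_lt_R0; lra).
  assert (Hbw : sqrt b2 * sqrt v <= sqrt v').
  { apply sq_le; [nra|lra|]. pose proof (sqrt_sqrt b2 ltac:(lra)) as Eb.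
    replace (sqrt b2 * sqrt v * (sqrt b2 * sqrt v)) with ((sqrt b2 * sqrt b2) * (sqrt v * sqrt v)) by ring.
    rewrite Eb, Ev, Ev'. unfold v'. nra. }
  assert (Hgw : sqrt (1 - b2) * Rabs g <= sqrt v').
  { apply sq_le; [pose proof (Rabs_pos g); nra|lra|]. pose proof (sqrt_sqrt (1-b2) ltac:(lra)) as Es.
    replace (sqrt (1-b2) * Rabs g * (sqrt (1-b2) * Rabs g)) with ((sqrt (1-b2) * sqrt (1-b2)) * (Rabs g * Rabs g)) by ring.
    rewrite Es, Ev'. rewrite <- Rabs_mult, Rabs_right by nra. unfold v'. simpl in *. nra. }
  assert (Hgm : g1 * sqrt v = rho g1 b2 * sqrt b2 * sqrt v) by (unfold rho; field; lra).
  assert (HRdef : RR g1 b2 * (1 - rho g1 b2) = (1 - g1) / sqrt (1 - b2)) by (unfold RR; field; lra).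
  eapply Rle_trans. apply Rabs_triang. rewrite !Rabs_mult, (Rabs_right g1), (Rabs_right (1 - g1)) by lra.
  assert (Ha1 : g1 * Rabs m <= g1 * (RR g1 b2 * sqrt v)) by (apply Rmult_le_compat_l; lra).
  assert (Ha2 : g1 * (RR g1 b2 * sqrt v) <= rho g1 b2 * RR g1 b2 * sqrt v').
  { replace (g1 * (RR g1 b2 * sqrt v)) with (rho g1 b2 * RR g1 b2 * (sqrt b2 * sqrt v)) by (unfold rho; field; lra).
    apply Rmult_le_compat_l; [nra|lra]. }
  assert (Ha3 : (1 - g1) * Rabs g <= (1 - g1) / sqrt (1 - b2) * sqrt v').
  { apply Rmult_le_reg_r with (sqrt (1 - b2)); auto.
    replace ((1 - g1) / sqrt (1 - b2) * sqrt v' * sqrt (1 - b2)) with ((1 - g1) * sqrt v') by (field; lra).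
    nra. }
  rewrite <- HRdef in Ha3. nra.
Qed.

Lemma decomp g1 m m' g w w' : g1 < 1 -> 0 < w -> 0 < w' -> m' = g1 * m + (1 - g1) * g ->
  - (m' / w') - cc g1 * (m' / w') + cc g1 * (m / w) = - g / w' + cc g1 * m * (1 / w - 1 / w').
Proof. intros. subst. unfold cc. field. lra. Qed.

Lemma core_C g1 b2 al k st : hyps g1 b2 -> Good g1 b2 st ->
  let st' := adam_step al g1 b2 0 1 k st (CC g1 b2) in
  - (st_m st' / sqrt (st_v st')) + Hf g1 b2 st' - Hf g1 b2 st >=
  - (K1 g1 b2 + lam g1 b2 * ln (CC g1 b2)).
Proof.
  intros Hh [(Hx & Hv & Hm) Hv1] st'.
  pose proof (basics g1 b2 Hh) as (Hb & Hsb & Hrho & Hcc & HR & Hl & Hmu & _ & _ & _ & HC & _ & _ & _ & _ & Hs1).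
  destruct Hh as (H1 & H2 & H3).
  unfold Hf, st'. rewrite step_m, step_v.
  set (v := st_v st) in *. set (m := st_m st) in *. set (C := CC g1 b2) in *.
  set (v' := b2 * v + (1 - b2) * C ^ 2).
  assert (Hw : 0 < sqrt v) by (apply sqrt_lt_R0; lra).
  assert (Hw' : 0 < sqrt v') by (apply sqrt_lt_R0; unfold v'; simpl; nra).
  pose proof (decomp g1 m (g1 * m + (1 - g1) * C) C (sqrt v) (sqrt v') (proj2 H1) Hw Hw' eq_refl) as Hd.
  pose proof (coreC (cc g1) (RR g1 b2) (lam g1 b2) (mu g1 b2) b2 m v (sqrt v) (sqrt v') C
    ltac:(lra) Hcc ltac:(lra) ltac:(lra) Hmu HC ltac:(lra) Hw Hw' (sqrt_sqrt v ltac:(lra))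
    (sqrt_sqrt v' ltac:(unfold v'; simpl; nra)) Hm) as Hc.
  fold v' in Hc. unfold K1.
  replace (- ((g1 * m + (1 - g1) * C) / sqrt v') +
    (- cc g1 * ((g1 * m + (1 - g1) * C) / sqrt v') - lam g1 b2 / 2 * ln (Rmax v' 1) + mu g1 b2 * Rmin v' 1) -
    (- cc g1 * (m / sqrt v) - lam g1 b2 / 2 * ln (Rmax v 1) + mu g1 b2 * Rmin v 1))
   with ((- ((g1 * m + (1 - g1) * C) / sqrt v') - cc g1 * ((g1 * m + (1 - g1) * C) / sqrt v') + cc g1 * (m / sqrt v))
     - lam g1 b2 / 2 * (ln (Rmax v' 1) - ln (Rmax v 1)) + mu g1 b2 * (Rmin v' 1 - Rmin v 1)) by ring.
  rewrite Hd. lra.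
Qed.

Lemma core_M g1 b2 al k st : hyps g1 b2 -> Good g1 b2 st ->
  let st' := adam_step al g1 b2 0 1 k st (-1) in
  - (st_m st' / sqrt (st_v st')) + Hf g1 b2 st' - Hf g1 b2 st >= A0 b2.
Proof.
  intros Hh [(Hx & Hv & Hm) Hv1] st'.
  pose proof (basics g1 b2 Hh) as (Hb & Hsb & Hrho & Hcc & HR & Hl & Hmu & HA & _ & _ & HC & _ & _ & _ & _ & Hs1).
  destruct Hh as (H1 & H2 & H3).
  unfold Hf, st'. rewrite step_m, step_v.
  set (v := st_v st) in *. set (m := st_m st) in *.
  replace (b2 * v + (1 - b2) * (-1) ^ 2) with (b2 * v + (1 - b2)) by ring.
  set (v' := b2 * v + (1 - b2)).
  assert (Hw : 0 < sqrt v) by (apply sqrt_lt_R0; lra).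
  assert (Hw' : 0 < sqrt v') by (apply sqrt_lt_R0; unfold v'; nra).
  pose proof (decomp g1 m (g1 * m + (1 - g1) * (-1)) (-1) (sqrt v) (sqrt v') (proj2 H1) Hw Hw' eq_refl) as Hd.
  replace (- ((g1 * m + (1 - g1) * -1) / sqrt v') +
    (- cc g1 * ((g1 * m + (1 - g1) * -1) / sqrt v') - lam g1 b2 / 2 * ln (Rmax v' 1) + mu g1 b2 * Rmin v' 1) -
    (- cc g1 * (m / sqrt v) - lam g1 b2 / 2 * ln (Rmax v 1) + mu g1 b2 * Rmin v 1))
   with ((- ((g1 * m + (1 - g1) * -1) / sqrt v') - cc g1 * ((g1 * m + (1 - g1) * -1) / sqrt v') + cc g1 * (m / sqrt v))
     - lam g1 b2 / 2 * (ln (Rmax v' 1) - ln (Rmax v 1)) + mu g1 b2 * (Rmin v' 1 - Rmin v 1)) by ring.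
  rewrite Hd. replace (- -1 / sqrt v') with (1 / sqrt v') by (field; lra).
  destruct (Rle_lt_dec 1 v) as [Hv2|Hv2].
  - assert (1 <= v') by (unfold v'; nra).
    rewrite (Rmax_left v), (Rmax_left v'), (Rmin_right v), (Rmin_right v') by lra.
    pose proof (coreM_big (cc g1) (RR g1 b2) b2 m v (sqrt v) (sqrt v') ltac:(lra) Hcc ltac:(lra) Hv2 Hw Hw'
       (sqrt_sqrt v ltac:(lra)) (sqrt_sqrt v' ltac:(unfold v'; nra)) Hm) as Hc.
    fold v' in Hc. unfold lam, A0. lra.
  - assert (v' < 1) by (unfold v'; nra).
    rewrite (Rmax_right v), (Rmax_right v'), (Rmin_left v), (Rmin_left v') by lra.
    pose proof (coreM_small (cc g1) (RR g1 b2) b2 m v (sqrt v) (sqrt v') ltac:(lra) Hcc ltac:(lra) ltac:(lra) Hw Hw'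
       (sqrt_sqrt v ltac:(lra)) (sqrt_sqrt v' ltac:(unfold v'; nra)) Hm) as Hc.
    fold v' in Hc. unfold mu. pose proof (Rmin_l (1/2) (ln (4 / (1 + 3 * b2)) / 2)). unfold A0.
    lra.
Qed.

Definition alp al (j : nat) := al / sqrt (INR (S j)).
Definition Phi g1 b2 al j st := st_x st + alp al j * Hf g1 b2 st.

Lemma alp_facts al j : 0 < al -> 0 < alp al (S j) <= alp al j /\ alp al j <= al.
Proof.
  intros. unfold alp.
  assert (H1 : 1 <= INR (S j)) by (rewrite S_INR; pose proof (pos_INR j); lra).
  assert (H2 : INR (S j) <= INR (S (S j))) by (rewrite (S_INR (S j)); lra).
  assert (H3 : 1 <= sqrt (INR (S j))) by (rewrite <- sqrt_1; apply sqrt_le_1_alt; lra).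
  assert (H4 : sqrt (INR (S j)) <= sqrt (INR (S (S j)))) by (apply sqrt_le_1_alt; lra).
  split; [split|].
  - apply Rdiv_lt_0_compat; lra.
  - unfold Rdiv. apply Rmult_le_compat_l; [lra|]. apply Rinv_le_contravar; lra.
  - apply Rmult_le_reg_r with (sqrt (INR (S j))); [lra|]. field_simplify; nra.
Qed.

Lemma Hf_bound g1 b2 st : hyps g1 b2 -> Good g1 b2 st ->
  - BB g1 b2 <= Hf g1 b2 st <= BB g1 b2.
Proof.
  intros Hh [(Hx & Hv & Hm) Hv1].
  pose proof (basics g1 b2 Hh) as (Hb & Hsb & Hrho & Hcc & HR & Hl & Hmu & HA & _ & _ & HC & _ & _ & _ & _ & Hs1).
  unfold Hf, BB. set (v := st_v st) in *. set (m := st_m st) in *.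
  assert (Hw : 0 < sqrt v) by (apply sqrt_lt_R0; destruct Hh as (?&?&?); lra).
  apply m_bounds in Hm.
  assert (Hr : - RR g1 b2 <= m / sqrt v <= RR g1 b2).
  { split; apply Rmult_le_reg_r with (sqrt v); auto; field_simplify; lra. }
  assert (0 <= ln (Rmax v 1) <= 2 * ln (CC g1 b2)).
  { split. apply ln_ge0, Rmax_r. replace (2 * ln (CC g1 b2)) with (ln (CC g1 b2 * CC g1 b2)) by (rewrite ln_mult; lra).
    apply ln_le'. pose proof (Rmax_r v 1); lra. apply Rmax_lub; nra. }
  assert (0 <= Rmin v 1 <= 1) by (split; [apply Rmin_glb; lra|apply Rmin_r]).
  split; nra.
Qed.

Lemma clamp_low x a r RR : 0 <= x <= 1 -> Rabs r <= RR -> 0 <= a -> a * RR <= 1/2 ->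
  x - a * r - 2 * RR * a * x <= clamp 0 1 (x - a * r).
Proof.
  intros Hx Hr Ha HaR. pose proof (Rle_abs r). pose proof (Rle_abs (-r)). rewrite Rabs_Ropp in *.
  unfold clamp. eapply Rle_trans; [|apply Rmax_r].
  assert (0 <= RR) by (pose proof (Rabs_pos r); lra).
  assert (0 <= a * RR) by nra. assert (0 <= a * RR * x) by nra.
  assert (- (a * RR) <= a * r <= a * RR) by (split; nra).
  destruct (Rle_lt_dec (x - a * r) 1).
  - rewrite Rmin_right by lra. lra.
  - rewrite Rmin_left by lra. assert (1/2 <= x) by lra.
    assert (a * RR <= 2 * (a * RR * x)) by nra. lra.
Qed.

Lemma E1 al g1 b2 k st phi :
  adam_expect al g1 b2 0 1 (DD g1 b2) 1 k st phi =
  pp g1 b2 * phi (adam_step al g1 b2 0 1 k st (CC g1 b2)) +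
  (qq g1 b2 * phi (adam_step al g1 b2 0 1 k st (-1)) + 0).
Proof. reflexivity. Qed.

Lemma phi_step g1 b2 al k st g : hyps g1 b2 -> 0 < al -> Good g1 b2 st ->
  alp al k * RR g1 b2 <= 1/2 -> (g = CC g1 b2 \/ g = -1) ->
  let st' := adam_step al g1 b2 0 1 k st g in
  Phi g1 b2 al (S k) st' >= st_x st - 2 * RR g1 b2 * alp al k * st_x st
     - (alp al k - alp al (S k)) * BB g1 b2
     + alp al k * (- (st_m st' / sqrt (st_v st')) + Hf g1 b2 st').
Proof.
  intros Hh Hal Hg HaR Hgg st'.
  assert (Gs : Good g1 b2 st') by (apply step_pres; auto; apply Hg).
  pose proof (Hf_bound g1 b2 st' Hh Gs) as HB.
  pose proof (alp_facts al k Hal) as ((Ha1 & Ha2) & Ha3).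
  destruct Gs as [(Hx' & Hv' & Hm') Hv1'].
  pose proof (basics g1 b2 Hh) as (Hb & _ & _ & _ & HR & _).
  assert (Hw' : 0 < sqrt (st_v st')) by (apply sqrt_lt_R0; destruct Hh as (?&?&?); lra).
  assert (Hr : Rabs (st_m st' / sqrt (st_v st')) <= RR g1 b2).
  { unfold Rdiv. rewrite Rabs_mult, Rabs_inv, (Rabs_right (sqrt _)) by lra.
    apply Rmult_le_reg_r with (sqrt (st_v st')); auto. field_simplify; lra. }
  unfold Phi. unfold st' at 1. rewrite step_x.
  rewrite <- (step_m al g1 b2 0 1 k st g), <- (step_v al g1 b2 0 1 k st g).
  fold st'.
  replace (st_x st - al / sqrt (INR (S k)) * st_m st' / sqrt (st_v st'))
    with (st_x st - alp al k * (st_m st' / sqrt (st_v st'))) by (unfold alp, Rdiv; ring).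
  pose proof (clamp_low (st_x st) (alp al k) (st_m st' / sqrt (st_v st')) (RR g1 b2) (proj1 (proj1 Hg)) Hr ltac:(lra) HaR).
  assert (alp al (S k) * Hf g1 b2 st' >= alp al k * Hf g1 b2 st' - (alp al k - alp al (S k)) * BB g1 b2) by nra.
  lra.
Qed.

Lemma one_step g1 b2 al k st : hyps g1 b2 -> 0 < al -> Good g1 b2 st ->
  alp al k * RR g1 b2 <= 1/2 ->
  adam_expect al g1 b2 0 1 (DD g1 b2) 1 k st (Phi g1 b2 al (S k)) >=
  Phi g1 b2 al k st + alp al k * eps g1 b2 - 2 * RR g1 b2 * alp al k * st_x st
  - (alp al k - alp al (S k)) * BB g1 b2.
Proof.
  intros Hh Hal Hg HaR. rewrite E1.
  pose proof (phi_step g1 b2 al k st (CC g1 b2) Hh Hal Hg HaR (or_introl eq_refl)) as P1.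
  pose proof (phi_step g1 b2 al k st (-1) Hh Hal Hg HaR (or_intror eq_refl)) as P2.
  pose proof (core_C g1 b2 al k st Hh Hg) as C1.
  pose proof (core_M g1 b2 al k st Hh Hg) as C2.
  cbv zeta in P1, P2, C1, C2.
  pose proof (basics g1 b2 Hh) as (_ & _ & _ & _ & _ & _ & _ & _ & _ & _ & _ & _ & Hp & Hq & Hpq & _).
  pose proof (alp_facts al k Hal) as ((Ha1 & Ha2) & Ha3).
  set (XC := - (st_m (adam_step al g1 b2 0 1 k st (CC g1 b2)) / sqrt (st_v (adam_step al g1 b2 0 1 k st (CC g1 b2))))
       + Hf g1 b2 (adam_step al g1 b2 0 1 k st (CC g1 b2))) in *.
  set (XM := - (st_m (adam_step al g1 b2 0 1 k st (-1)) / sqrt (st_v (adam_step al g1 b2 0 1 k st (-1))))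
       + Hf g1 b2 (adam_step al g1 b2 0 1 k st (-1))) in *.
  assert (pp g1 b2 * XC + qq g1 b2 * XM >= Hf g1 b2 st + eps g1 b2).
  { unfold eps. idtac. match goal with H: _ |- _ => idtac end.
    assert (pp g1 b2 * (XC - Hf g1 b2 st) >= pp g1 b2 * (- (K1 g1 b2 + lam g1 b2 * ln (CC g1 b2)))) by (apply Rmult_ge_compat_l; [lra|]; lra).
    assert (qq g1 b2 * (XM - Hf g1 b2 st) >= qq g1 b2 * A0 b2) by (apply Rmult_ge_compat_l; lra).
    replace (Hf g1 b2 st) with ((pp g1 b2 + qq g1 b2) * Hf g1 b2 st) at 1 by (rewrite Hpq; ring).
    lra. }
  set (L := st_x st - 2 * RR g1 b2 * alp al k * st_x st - (alp al k - alp al (S k)) * BB g1 b2) in *.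
  assert (pp g1 b2 * Phi g1 b2 al (S k) (adam_step al g1 b2 0 1 k st (CC g1 b2)) >= pp g1 b2 * (L + alp al k * XC)) by (apply Rmult_ge_compat_l; lra).
  assert (qq g1 b2 * Phi g1 b2 al (S k) (adam_step al g1 b2 0 1 k st (-1)) >= qq g1 b2 * (L + alp al k * XM)) by (apply Rmult_ge_compat_l; lra).
  assert (alp al k * (pp g1 b2 * XC + qq g1 b2 * XM) >= alp al k * (Hf g1 b2 st + eps g1 b2)) by (apply Rmult_ge_compat_l; lra).
  unfold Phi at 3. unfold L in *.
  replace (st_x st) with ((pp g1 b2 + qq g1 b2) * st_x st) at 1 by (rewrite Hpq; ring).
  nra.
Qed.

Definition s0 : adam_state := (1, 0, 0).

Lemma DD_dist g1 b2 : hyps g1 b2 -> is_distribution (DD g1 b2).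
Proof.
  intros Hh. pose proof (basics g1 b2 Hh) as (_ & _ & _ & _ & _ & _ & _ & _ & _ & _ & _ & _ & Hp & Hq & Hpq & _).
  split. repeat constructor; simpl; lra. simpl. lra.
Qed.

Lemma DD_pres g1 b2 al : hyps g1 b2 -> forall k st pg, In pg (DD g1 b2) -> Good g1 b2 st ->
  Good g1 b2 (adam_step al g1 b2 0 1 k st (snd pg)).
Proof.
  intros Hh k st pg Hin Hg. apply step_pres; auto. apply Hg.
  destruct Hin as [<-|[<-|[]]]; simpl; auto.
Qed.

Lemma Inv_s0 g1 b2 : hyps g1 b2 -> Inv g1 b2 s0.
Proof.
  intros Hh. pose proof (basics g1 b2 Hh) as (_ & _ & _ & _ & HR & _ & _ & _ & _ & _ & HC & _).
  unfold Inv, s0, st_x, st_v, st_m; simpl. rewrite sqrt_0, Rabs_R0. repeat split; nra.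
Qed.

Lemma mono0 g1 b2 al : hyps g1 b2 -> forall i f h, (forall st, Good g1 b2 st -> f st <= h st) ->
  adam_expect al g1 b2 0 1 (DD g1 b2) (S i) 0 s0 f <= adam_expect al g1 b2 0 1 (DD g1 b2) (S i) 0 s0 h.
Proof.
  intros Hh i f h Hfh. rewrite !E_S. apply wsum_mono.
  - apply DD_dist; auto.
  - intros pg Hin. apply E_mono with (P := Good g1 b2).
    + apply DD_dist; auto.
    + apply DD_pres; auto.
    + apply step_pres; auto. apply Inv_s0; auto. destruct Hin as [<-|[<-|[]]]; simpl; auto.
    + auto.
Qed.

Definition Psi g1 b2 al j := adam_expect al g1 b2 0 1 (DD g1 b2) j 0 s0 (Phi g1 b2 al j).
Definition Ex g1 b2 al j := adam_expect al g1 b2 0 1 (DD g1 b2) j 0 s0 (fun st => st_x st).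

Lemma Psi_step g1 b2 al i : hyps g1 b2 -> 0 < al -> alp al (S i) * RR g1 b2 <= 1/2 ->
  Psi g1 b2 al (S (S i)) >= Psi g1 b2 al (S i) + alp al (S i) * eps g1 b2
     - 2 * RR g1 b2 * alp al (S i) * Ex g1 b2 al (S i) - (alp al (S i) - alp al (S (S i))) * BB g1 b2.
Proof.
  intros Hh Hal HaR. unfold Psi, Ex.
  rewrite E_tower. simpl (0 + S i)%nat.
  set (a1 := alp al (S i) * eps g1 b2).
  set (a2 := - (2 * RR g1 b2 * alp al (S i))).
  set (a3 := - ((alp al (S i) - alp al (S (S i))) * BB g1 b2)).
  assert (Heq : adam_expect al g1 b2 0 1 (DD g1 b2) (S i) 0 s0
     (fun st => Phi g1 b2 al (S i) st + (a1 + (a2 * st_x st + a3))) =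
     adam_expect al g1 b2 0 1 (DD g1 b2) (S i) 0 s0 (Phi g1 b2 al (S i)) + (a1 +
     (a2 * adam_expect al g1 b2 0 1 (DD g1 b2) (S i) 0 s0 (fun st => st_x st) + a3))).
  { rewrite E_plus, E_plus, E_plus, E_scale, !E_const by (apply DD_dist; auto). reflexivity. }
  assert (Hm : adam_expect al g1 b2 0 1 (DD g1 b2) (S i) 0 s0
     (fun st => Phi g1 b2 al (S i) st + (a1 + (a2 * st_x st + a3))) <=
     adam_expect al g1 b2 0 1 (DD g1 b2) (S i) 0 s0
     (fun st => adam_expect al g1 b2 0 1 (DD g1 b2) 1 (S i) st (Phi g1 b2 al (S (S i))))).
  { apply mono0; auto. intros st Hg. pose proof (one_step g1 b2 al (S i) st Hh Hal Hg HaR).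
    unfold a1, a2, a3. lra. }
  unfold a1, a2, a3 in *. lra.
Qed.

Lemma Psi_bounds g1 b2 al i : hyps g1 b2 -> 0 < al ->
  - (al * BB g1 b2) <= Psi g1 b2 al (S i) <= 1 + al * BB g1 b2.
Proof.
  intros Hh Hal. unfold Psi.
  pose proof (alp_facts al (S i) Hal) as ((Ha1 & Ha2) & Ha3).
  split.
  - rewrite <- (E_const al g1 b2 0 1 (DD g1 b2) (S i) (DD_dist g1 b2 Hh) 0 s0 (- (al * BB g1 b2))).
    apply mono0; auto. intros st Hg. pose proof (Hf_bound g1 b2 st Hh Hg).
    destruct Hg as [(Hx & _) _]. unfold Phi. nra.
  - rewrite <- (E_const al g1 b2 0 1 (DD g1 b2) (S i) (DD_dist g1 b2 Hh) 0 s0 (1 + al * BB g1 b2)).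
    apply mono0; auto. intros st Hg. pose proof (Hf_bound g1 b2 st Hh Hg).
    destruct Hg as [(Hx & _) _]. unfold Phi. nra.
Qed.

Lemma Ex_abs g1 b2 al i : hyps g1 b2 ->
  adam_iter_expect al g1 b2 0 1 1 (DD g1 b2) (S i) (fun x => Rabs (x - 0)) = Ex g1 b2 al (S i).
Proof.
  intros Hh. unfold adam_iter_expect, Ex. fold s0. apply Rle_antisym; apply mono0; auto;
  intros st [(Hx & _) _]; rewrite Rminus_0_r, Rabs_right; lra.
Qed.

Lemma nonconv g1 b2 al : hyps g1 b2 -> 0 < al ->
  ~ Un_cv (fun n => adam_iter_expect al g1 b2 0 1 1 (DD g1 b2) n (fun x => Rabs (x - 0))) 0.
Proof.
  intros Hh Hal Hcv.
  pose proof (basics g1 b2 Hh) as (Hb & _ & _ & _ & HR & _ & _ & _ & _ & _ & HC & He & _).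
  set (e := eps g1 b2) in *. set (R0 := RR g1 b2) in *. set (B := BB g1 b2) in *.
  assert (HB : 0 <= B).
  { pose proof (Hf_bound g1 b2 (adam_step al g1 b2 0 1 0 s0 (-1)) Hh
      (step_pres g1 b2 al 0 s0 (-1) Hh (Inv_s0 g1 b2 Hh) (or_intror eq_refl))). fold B in H. lra. }
  destruct (Hcv (e / (4 * R0)) ltac:(apply Rdiv_lt_0_compat; lra)) as [N2 HN2].
  destruct (INR_unbounded ((2 * al * R0) * (2 * al * R0))) as [N1 HN1].
  set (N := S (max N1 N2)).
  assert (Hstep : forall j, (N <= j)%nat ->
    Psi g1 b2 al (S j) >= Psi g1 b2 al j + alp al j * e / 2 - (alp al j - alp al (S j)) * B).
  { intros j Hj. destruct j as [|i]; [unfold N in Hj; lia|].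
    assert (HaR : alp al (S i) * R0 <= 1/2).
    { unfold alp. 
      assert (INR N1 <= INR (S (S i))) by (apply le_INR; unfold N in Hj; lia).
      assert (2 * al * R0 <= sqrt (INR (S (S i)))).
      { rewrite <- (sqrt_square (2 * al * R0)) by nra. apply sqrt_le_1_alt. lra. }
      assert (0 < sqrt (INR (S (S i)))) by nra.
      apply Rmult_le_reg_r with (sqrt (INR (S (S i)))); auto. field_simplify; lra. }
    pose proof (Psi_step g1 b2 al i Hh Hal HaR) as H. fold e R0 B in H.
    assert (HE : Ex g1 b2 al (S i) < e / (4 * R0)).
    { rewrite <- Ex_abs by auto. specialize (HN2 (S i) ltac:(unfold N in Hj; lia)).
      unfold R_dist in HN2. rewrite Rminus_0_r in HN2. pose proof (Rle_abs (adam_iter_expect al g1 b2 0 1 1 (DD g1 b2) (S i) (fun x : R => Rabs (x - 0)))). lra. }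
    pose proof (alp_facts al (S i) Hal) as ((Ha1 & Ha2) & Ha3).
    assert (2 * R0 * alp al (S i) * Ex g1 b2 al (S i) <= alp al (S i) * e / 2).
    { assert (2 * R0 * Ex g1 b2 al (S i) <= e / 2).
      { apply Rmult_le_reg_r with (/ (2 * R0)). apply Rinv_0_lt_compat; lra.
        replace (2 * R0 * Ex g1 b2 al (S i) * / (2 * R0)) with (Ex g1 b2 al (S i)) by (field; lra).
        replace (e / 2 * / (2 * R0)) with (e / (4 * R0)) by (field; lra). lra. }
      replace (alp al (S i) * e / 2) with (alp al (S i) * (e / 2)) by field.
      replace (2 * R0 * alp al (S i) * Ex g1 b2 al (S i)) with (alp al (S i) * (2 * R0 * Ex g1 b2 al (S i))) by ring.
      apply Rmult_le_compat_l; lra. }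
    lra. }
  assert (Hind : forall M, Psi g1 b2 al (N + M) >= Psi g1 b2 al N + INR M * (e / 2) * alp al (N + M)
       - (alp al N - alp al (N + M)) * B).
  { induction M.
    - rewrite Nat.add_0_r. simpl. lra.
    - replace (N + S M)%nat with (S (N + M)) by lia.
      pose proof (Hstep (N + M)%nat ltac:(lia)).
      pose proof (alp_facts al (N + M) Hal) as ((Ha1 & Ha2) & Ha3).
      rewrite S_INR.
      assert (INR M * (e / 2) * alp al (S (N + M)) <= INR M * (e / 2) * alp al (N + M)).
      { apply Rmult_le_compat_l; [|lra]. pose proof (pos_INR M). nra. }
      nra. }
  destruct (INR_unbounded (4 * (1 + 3 * al * B) / (e * al))) as [K0 HK0].
  set (K := max (S N) K0).
  specialize (Hind (K * K)%nat).
  assert (HKN : (S N <= K)%nat) by (unfold K; lia).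
  assert (HKK : INR K0 <= INR K) by (apply le_INR; unfold K; lia).
  assert (HK1 : 1 <= INR K) by (replace 1 with (INR 1) by reflexivity; apply le_INR; lia).
  assert (Hsq : sqrt (INR (S (N + K * K))) <= 2 * INR K).
  { rewrite <- (sqrt_square (2 * INR K)) by lra. apply sqrt_le_1_alt.
    replace (2 * INR K * (2 * INR K)) with (INR (4 * K * K)) by (rewrite !mult_INR; simpl; ring).
    apply le_INR. nia. }
  assert (Hal2 : al / (2 * INR K) <= alp al (N + K * K)).
  { unfold alp. assert (0 < sqrt (INR (S (N + K * K)))) by (apply sqrt_lt_R0; apply lt_0_INR; lia).
    unfold Rdiv. apply Rmult_le_compat_l; [lra|]. apply Rinv_le_contravar; lra. }
  pose proof (Psi_bounds g1 b2 al (N + K * K - 1) Hh Hal) as [_ Hu].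
  replace (S (N + K * K - 1)) with (N + K * K)%nat in Hu by lia.
  pose proof (Psi_bounds g1 b2 al (N - 1) Hh Hal) as [Hl _].
  replace (S (N - 1)) with N in Hl by (unfold N; lia).
  pose proof (alp_facts al N Hal) as ((_ & _) & HaN).
  pose proof (alp_facts al (N + K * K) Hal) as ((_ & _) & _).
  assert (0 < alp al (N + K * K)).
  { unfold alp. apply Rdiv_lt_0_compat; auto. apply sqrt_lt_R0, lt_0_INR; lia. }
  assert (INR (K * K) * (e / 2) * alp al (N + K * K) >= INR K * e * al / 4).
  { rewrite mult_INR.
    assert (INR K * INR K * (e / 2) * (al / (2 * INR K)) = INR K * e * al / 4) by (field; lra).
    assert (INR K * INR K * (e / 2) * (al / (2 * INR K)) <= INR K * INR K * (e / 2) * alp al (N + K * K)).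
    { apply Rmult_le_compat_l; auto. nra. }
    lra. }
  fold B in Hu, Hl.
  assert ((alp al N - alp al (N + K * K)) * B <= al * B) by (apply Rmult_le_compat_r; lra).
  assert (INR K * e * al / 4 <= 1 + 3 * al * B) by lra.
  assert (4 * (1 + 3 * al * B) / (e * al) < INR K) by lra.
  assert (4 * (1 + 3 * al * B) < INR K * (e * al)).
  { apply Rmult_lt_reg_r with (/ (e * al)). apply Rinv_0_lt_compat; nra.
    replace (INR K * (e * al) * / (e * al)) with (INR K) by (field; nra). exact H3. }
  nra.
Qed.

Theorem theorem3 (beta1 beta2 : R)
  (Hb1 : 0 <= beta1 < 1) (Hb2 : 0 <= beta2 < 1) (Hb : beta1 < sqrt beta2) :
  exists (a b : R) (D : distribution) (xstar x1 : R),
    a <= b /\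
    is_distribution D /\
    Forall (fun pg => snd pg <> 0) D /\
    a <= x1 <= b /\
    (* xstar is the (unique) minimizer of F = E[f] over F = [a,b] *)
    (a <= xstar <= b /\ forall y, a <= y <= b -> objective D xstar <= objective D y) /\
    (forall y, a <= y <= b -> (forall z, a <= z <= b -> objective D y <= objective D z) ->
       y = xstar) /\
    forall alpha : R, 0 < alpha ->
      ~ Un_cv (fun n => adam_iter_expect alpha beta1 beta2 a b x1 D n
                          (fun x => Rabs (x - xstar))) 0.
Proof.
  assert (Hh : hyps beta1 beta2) by (split; [|split]; auto).
  pose proof (basics beta1 beta2 Hh) as (_ & _ & _ & _ & _ & _ & _ & _ & _ & _ & HC & _ & Hp & Hq & Hpq & _).
  assert (Hobj : forall y, objective (DD beta1 beta2) y = (pp beta1 beta2 * CC beta1 beta2 - qq beta1 beta2) * y)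
    by (intros; simpl; ring).
  assert (Hpos : 0 < pp beta1 beta2 * CC beta1 beta2 - qq beta1 beta2).
  { unfold pp, qq. replace (2 / (CC beta1 beta2 + 2) * CC beta1 beta2 - CC beta1 beta2 / (CC beta1 beta2 + 2))
      with (CC beta1 beta2 / (CC beta1 beta2 + 2)) by (field; lra). apply Rdiv_lt_0_compat; lra. }
  exists 0, 1, (DD beta1 beta2), 0, 1.
  split; [lra|]. split; [apply DD_dist; auto|].
  split; [repeat constructor; simpl; lra|].
  split; [lra|].
  split; [split; [lra|]; intros y Hy; rewrite !Hobj; nra|].
  split.
  - intros y Hy Hmin. specialize (Hmin 0 ltac:(lra)). rewrite !Hobj in Hmin. nra.
  - intros alpha Hal. apply nonconv; auto.
Qed.
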